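(* Let $\mathsf{X}=\mathsf{Y}=\mathbb{R}^d$ with probability measures $\mu,\nu$ and cost $c(x,y)=\|x-y\|^2$, let $\pi_\varepsilon$ be the $(c,\varepsilon)$-cyclically invariant coupling for each $\varepsilon>0$ (assumed to exist), and assume $\pi_\varepsilon\to\pi_*$ weakly as $\varepsilon\to0$ for some $\pi_*\in\Pi(\mu,\nu)$. Let $\Gamma:=\operatorname{spt}\pi_*$, $\mathsf{X}_0:=\operatorname{proj}_{\mathsf{X}}\Gamma$, $\mathsf{Y}_0:=\operatorname{proj}_{\mathsf{Y}}\Gamma$, and assume $\mathsf{X}_0$ is strictly convex. Consider $(x,y)\in(\mathsf{X}_0\times\mathsf{Y}_0)\setminus\Gamma$ with $x\in\partial\mathsf{X}_0$. Suppose that $\pi_*$ is given by a transport map $T:\mathsf{X}_0\to\mathbb{R}^d$ (i.e., $\Gamma=\{(x',T(x')):x'\in\mathsf{X}_0\}$) which is continuous on $B_r(x)\cap\mathsf{X}_0$ for some $r>0$. Then $I(x,y)>0$.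
   Context: $\mathsf{X}_0$ is strictly convex if for distinct $x,x'\in\mathsf{X}_0$ the open segment $(x,x')$ is contained in $\operatorname{Int}\mathsf{X}_0$. $\Pi(\mu,\nu)$ is the set of couplings and $P:=\mu\otimes\nu$. A coupling $\pi$ is $(c,\varepsilon)$-cyclically invariant if $\pi\sim P$ and its density admits a version $\frac{d\pi}{dP}:\mathsf{X}\times\mathsf{Y}\to(0,\infty)$ with $\prod_{i=1}^k\frac{d\pi}{dP}(x_i,y_i)=\exp\big(-\frac1\varepsilon[\sum_{i=1}^k c(x_i,y_i)-\sum_{i=1}^k c(x_i,y_{i+1})]\big)\prod_{i=1}^k\frac{d\pi}{dP}(x_i,y_{i+1})$ for all $k$ and points, $y_{k+1}:=y_1$. The function $I$ is $I(x,y):=\sup_{k\ge2}\sup_{(x_i,y_i)_{i=2}^k\subset\Gamma}\sup_{\sigma\in\Sigma(k)}\sum_{i=1}^k c(x_i,y_i)-\sum_{i=1}^k c(x_i,y_{\sigma(i)})$ with $(x_1,y_1):=(x,y)$ and $\Sigma(k)$ the permutations of $\{1,\dots,k\}$. $B_r(x)$ is the open ball. *)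

(* Defs.v *)
From HB Require Import structures.
From mathcomp Require Import all_boot all_order all_algebra all_fingroup.
From mathcomp Require Import all_classical all_reals all_analysis.
Set Implicit Arguments. Unset Strict Implicit. Unset Printing Implicit Defensive.
Import Order.TTheory GRing.Theory Num.Theory.
Import numFieldNormedType.Exports.
Local Open Scope classical_set_scope.
Local Open Scope ring_scope.

Definition borelRd (R : realType) (d : nat) :=
  g_sigma_algebraType (@open 'rV[R]_d).

(* The measurable space X x Y = R^d x R^d with the product sigma-algebra
   (which is the Borel sigma-algebra of R^(2d)). *)
Definition XY (R : realType) (d : nat) := (borelRd R d * borelRd R d)%type.

Definition sqdist (R : realType) (d : nat) (x y : 'rV[R]_d) : R :=
  \sum_(i < d) (x ord0 i - y ord0 i) ^+ 2.

Definition eball (R : realType) (d : nat) (x : 'rV[R]_d) (r : R) :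
  set 'rV[R]_d := [set z | sqdist x z < r ^+ 2].

Definition is_coupling (R : realType) (d : nat)
  (mu nu : set (borelRd R d) -> \bar R) (pi : set (XY R d) -> \bar R) : Prop :=
  (forall A : set (borelRd R d), measurable A -> pi (A `*` setT) = mu A) /\
  (forall B : set (borelRd R d), measurable B -> pi (setT `*` B) = nu B).

Definition cyclically_invariant (R : realType) (d : nat)
  (c : 'rV[R]_d -> 'rV[R]_d -> R) (eps : R)
  (mu nu : set (borelRd R d) -> \bar R) (pi : set (XY R d) -> \bar R) : Prop :=
  exists f : XY R d -> R,
    [/\ (forall z, 0 < f z),
        measurable_fun setT f,
        (forall A : set (XY R d), measurable A ->
           pi A = (\int[mu \x nu]_(z in A) (f z)%:E)%E) &
        (forall (k : nat) (xs ys : 'I_k.+1 -> 'rV[R]_d),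
           \prod_(i < k.+1) f (xs i, ys i) =
           expR (- eps^-1 * (\sum_(i < k.+1) c (xs i) (ys i)
                             - \sum_(i < k.+1) c (xs i) (ys (ordS i))))
           * \prod_(i < k.+1) f (xs i, ys (ordS i)))].

Definition weak_cvg_at0 (R : realType) (d : nat)
  (pe : R -> set (XY R d) -> \bar R) (ps : set (XY R d) -> \bar R) : Prop :=
  forall h : 'rV[R]_d * 'rV[R]_d -> R, continuous h ->
    (exists M : R, forall z, `|h z| <= M) ->
    (fun e : R => (\int[pe e]_z (h z)%:E)%E) @ 0^'+ -->
      (\int[ps]_z (h z)%:E)%E.

Definition spt (R : realType) (d : nat) (p : set (XY R d) -> \bar R) :
  set ('rV[R]_d * 'rV[R]_d) :=
  [set z | forall U : set ('rV[R]_d * 'rV[R]_d), open U -> U z -> (0 < p U)%E].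

Definition strictly_convex (R : realType) (d : nat) (X0 : set 'rV[R]_d) :=
  forall x x', X0 x -> X0 x' -> x != x' ->
    forall t : R, 0 < t < 1 -> (X0°) ((1 - t) *: x + t *: x').

Definition boundary (R : realType) (d : nat) (A : set 'rV[R]_d) :=
  closure A `\` A°.

Definition Ifun (R : realType) (d : nat) (c : 'rV[R]_d -> 'rV[R]_d -> R)
  (Gam : set ('rV[R]_d * 'rV[R]_d)) (x y : 'rV[R]_d) : \bar R :=
  ereal_sup [set r%:E | r in
    [set r : R | exists (k : nat) (pts : 'I_k.+2 -> 'rV[R]_d * 'rV[R]_d)
                        (s : 'S_k.+2),
       [/\ pts ord0 = (x, y),
           (forall i, i != ord0 -> Gam (pts i)) &
           r = \sum_(i < k.+2) c (pts i).1 (pts i).2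
               - \sum_(i < k.+2) c (pts i).1 (pts (s i)).2]]].

(* Main.v *)
Require Import Defs.
From HB Require Import structures.
From mathcomp Require Import all_boot all_order all_algebra all_fingroup.
From mathcomp Require Import all_classical all_reals all_analysis.
From mathcomp Require Import ring lra.
Import Order.TTheory GRing.Theory Num.Theory.
Import numFieldNormedType.Exports.
Local Open Scope classical_set_scope.
Local Open Scope ring_scope.

Definition dotv {R : realType} {d : nat} (u v : 'rV[R]_d) : R :=
  \sum_(i < d) u ord0 i * v ord0 i.

Lemma sq4 (R : realType) (d : nat) (a b a' b' : 'rV[R]_d) :
  sqdist a b + sqdist a' b' - sqdist a b' - sqdist a' b = 2 * dotv (a' - a) (b - b').
Proof.
rewrite /sqdist /dotv -big_split /= -!sumrB mulr_sumr; apply: eq_bigr => i _.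
rewrite !mxE; ring.
Qed.

Lemma Ifun_ge (R : realType) (d : nat) c Gam (x y : 'rV[R]_d) (r : R) k
  (pts : 'I_k.+2 -> 'rV[R]_d * 'rV[R]_d) (s : 'S_k.+2) :
  pts ord0 = (x, y) -> (forall i, i != ord0 -> Gam (pts i)) ->
  r = \sum_(i < k.+2) c (pts i).1 (pts i).2
               - \sum_(i < k.+2) c (pts i).1 (pts (s i)).2 ->
  (r%:E <= Ifun c Gam x y)%E.
Proof.
move=> H0 H1 Hr; apply: ereal_sup_ubound => /=.
by exists r => //; exists k, pts, s.
Qed.

Lemma cyc2 (R : realType) (d : nat) Gam (x y : 'rV[R]_d) p :
  Gam p -> ((2 * dotv (p.1 - x) (y - p.2))%:E <= Ifun (@sqdist R d) Gam x y)%E.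
Proof.
move=> Gp.
pose pts := fun i : 'I_2 => if i == ord0 then (x, y) else p.
apply: (@Ifun_ge _ _ _ _ _ _ _ 0 pts (tperm ord0 ord_max)) => //.
  by move=> i /negbTE; rewrite /pts => ->.
have E1 : lift ord0 ord0 = ord_max :> 'I_2 by apply/val_inj.
rewrite -sq4 !big_ord_recl !big_ord0 E1 tpermL tpermR /pts /=.
rewrite !addr0 opprD addrA //.
Qed.

Lemma cyc3 (R : realType) (d : nat) Gam (x y : 'rV[R]_d) p q :
  Gam p -> Gam q ->
  ((2 * dotv (q.1 - p.1) (p.2 - q.2))%:E <= Ifun (@sqdist R d) Gam x y)%E.
Proof.
move=> Gp Gq.
pose pts := fun i : 'I_3 => match val i with 0 => (x, y) | 1 => p | _ => q end.
pose i1 : 'I_3 := @Ordinal 3 1 isT.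
pose i2 : 'I_3 := @Ordinal 3 2 isT.
apply: (@Ifun_ge _ _ _ _ _ _ _ 1 pts (tperm i1 i2)) => //.
  by case=> [[|[|[|]]]].
have E1 : lift ord0 ord0 = i1 :> 'I_3 by apply/val_inj.
have E2 : lift ord0 (lift ord0 ord0) = i2 :> 'I_3 by apply/val_inj.
have E0 : tperm i1 i2 ord0 = ord0 by rewrite tpermD.
rewrite -sq4 !big_ord_recl !big_ord0 E1 E2 E0 tpermL tpermR /pts /=.
rewrite !addr0; ring.
Qed.

Lemma cont_eps (R : realType) (d : nat) (A : set 'rV[R]_d) (T : 'rV[R]_d -> 'rV[R]_d) x :
  {within A, continuous T} -> A x -> forall e : R, 0 < e ->
  exists2 rho : R, 0 < rho & forall z, A z -> `|x - z| < rho -> `|T x - T z| < e.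
Proof.
move=> /subspace_continuousP /(_ x) H Ax e e0.
have /cvgrPdist_lt /(_ e e0) := H Ax.
rewrite near_withinE => /nbhs_ballP [rho /= rho0 Hr].
exists rho => // z Az xz; apply: (Hr z) => //.
by rewrite -ball_normE /=.
Qed.

Lemma coord_le (R : realType) (d : nat) (v : 'rV[R]_d) i : `|v ord0 i| <= `|v|.
Proof.
rewrite [leRHS]/Num.Def.normr /= mx_normrE; apply/bigmax_geP; right => /=.
by exists (ord0, i).
Qed.

Lemma sqdist_le (R : realType) (d : nat) (x z : 'rV[R]_d) :
  sqdist x z <= d%:R * `|x - z| ^+ 2.
Proof.
have -> : d%:R * `|x - z| ^+ 2 = \sum_(i < d) `|x - z| ^+ 2 :> R.
  by rewrite sumr_const card_ord mulr_natl.
rewrite /sqdist; apply: ler_sum => i _.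
have := @coord_le R d (x - z) i; rewrite !mxE => H.
rewrite -(real_normK (num_real (x ord0 i - z ord0 i))).
by rewrite lerXn2r ?nnegrE.
Qed.

Lemma arith_sq (R : realType) (q D r : R) :
  0 <= q -> 0 <= D -> q * (D + 1) < r -> D * q ^+ 2 < r ^+ 2.
Proof.
move=> q0 D0 h.
have h0 : 0 <= q * (D + 1) by apply: mulr_ge0 => //; lra.
have h1 : q * (D + 1) * (q * (D + 1)) < r * r by apply: ltr_pM.
have h2 : 0 <= q * q * (D * D + D + 1).
  by apply: mulr_ge0; [apply: mulr_ge0|apply: addr_ge0; [apply: addr_ge0; [apply: mulr_ge0|]|]].
rewrite !expr2; nra.
Qed.

Theorem lemma5p3 (R : realType) (d : nat)
  (mu nu : probability (borelRd R d) R)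
  (pe : R -> probability (XY R d) R) (ps : probability (XY R d) R)
  (T : 'rV[R]_d -> 'rV[R]_d) (x y : 'rV[R]_d) :
  (forall eps : R, 0 < eps ->
     is_coupling mu nu (pe eps) /\
     cyclically_invariant (@sqdist R d) eps mu nu (pe eps)) ->
  is_coupling mu nu ps ->
  weak_cvg_at0 (fun e => pe e : set (XY R d) -> \bar R) ps ->
  strictly_convex (fst @` spt ps) ->
  (fst @` spt ps) x -> (snd @` spt ps) y -> ~ spt ps (x, y) ->
  boundary (fst @` spt ps) x ->
  spt ps = [set (x', T x') | x' in fst @` spt ps] ->
  (exists r : R, 0 < r /\
     {within eball x r `&` (fst @` spt ps), continuous T}) ->
  (0 < Ifun (@sqdist R d) (spt ps) x y)%E.
Proof.
move=> _ _ _ Hsc Hx Hy Hnot _ Hgraph [r [r0 Hcont]].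
have GamT : forall z, (fst @` spt ps) z -> spt ps (z, T z) by move=> z Xz; rewrite Hgraph; exists z.
have [x0 Xx0 Ey] : exists2 x0, (fst @` spt ps) x0 & y = T x0.
  case: Hy => z Hz Ez; rewrite Hgraph in Hz; case: Hz => x0 Xx0 Ez'.
  by exists x0; rewrite // -Ez -Ez'.
set w := y - T x.
have w0 : w != 0.
  apply/eqP => /eqP; rewrite subr_eq0 => /eqP Eyx; apply: Hnot; rewrite Eyx.
  exact: GamT.
have xx0 : x != x0.
  by apply/eqP => E; move/eqP: w0; apply; rewrite /w Ey -E subrr.
set X0 := fst @` spt ps in Hx Xx0 Hcont Hsc GamT.
have Ax : (eball x r `&` X0) x.
  split => //; rewrite /eball /= /sqdist big1 ?exprn_gt0 // => i _.
  by rewrite subrr expr0n.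
have [i wi] : exists i, w ord0 i != 0.
  apply: contrapT => H; move/eqP: w0; apply; apply/matrixP => a j.
  rewrite (ord1 a) [in RHS]mxE; apply/eqP; apply/negPn/negP => Hn; apply: H; by exists j.
set S2 := dotv w w.
have S2pos : 0 < S2.
  rewrite /S2 /dotv (bigD1 i) //=.
  have h1 : 0 < w ord0 i * w ord0 i by rewrite -expr2 lt0r sqrf_eq0 wi sqr_ge0.
  have h2 : 0 <= \sum_(j < d | j != i) w ord0 j * w ord0 j.
    by apply: sumr_ge0 => j _; rewrite -expr2 sqr_ge0.
  lra.
set S1 := \sum_(j < d) `|w ord0 j|.
have S1pos : 0 <= S1 by apply: sumr_ge0 => j _.
set eps := S2 / (S1 + 1).
have eps0 : 0 < eps by rewrite divr_gt0 // ltr_wpDl.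
have [rho rho0 Hrho] := @cont_eps R d _ T x Hcont Ax eps eps0.
set rho' := Order.min rho (r / (d%:R + 1)).
have dpos : 0 < d%:R + 1 :> R by rewrite ltr_wpDl.
have rho'0 : 0 < rho' by rewrite lt_min rho0 divr_gt0.
have rho'1 : rho' <= rho by rewrite ge_min lexx.
have rho'2 : rho' * (d%:R + 1) <= r.
  by rewrite -ler_pdivlMr // ge_min lexx orbT.
set u := x0 - x.
have upos : 0 < `|u| + 1 by rewrite ltr_wpDl.
set t := Order.min (1/2) (rho' / (2 * (`|u| + 1))).
have t0 : 0 < t by rewrite lt_min divr_gt0 // mulr_gt0.
have t1 : t <= 1/2 by rewrite ge_min lexx.
have t2 : t * (2 * (`|u| + 1)) <= rho'.
  by rewrite -ler_pdivlMr ?mulr_gt0 // ge_min lexx orbT.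
have tu : t * `|u| < rho' / 2 by nra.
set xt := (1 - t) *: x + t *: x0.
have : (X0°) xt.
  apply: Hsc => //; apply/andP; split => //; lra.
move=> /nbhs_ballP [eta /= eta0 Heta].
have wpos : 0 < `|w| + 1 by rewrite ltr_wpDl.
set s := Order.min eta rho' / (2 * (`|w| + 1)).
have mpos : 0 < Order.min eta rho' by rewrite lt_min eta0 rho'0.
have s0 : 0 < s by rewrite divr_gt0 // mulr_gt0.
have s2 : s * (2 * (`|w| + 1)) <= Order.min eta rho'.
  by rewrite -ler_pdivlMr ?mulr_gt0.
have m1 : Order.min eta rho' <= eta by rewrite ge_min lexx.
have m2 : Order.min eta rho' <= rho' by rewrite ge_min lexx orbT.
have sw1 : s * `|w| < eta by nra.
have sw2 : s * `|w| < rho' / 2 by nra.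
set x' := xt + s *: w.
have Xx' : X0 x'.
  apply: Heta; rewrite -ball_normE /=.
  have -> : xt - x' = - (s *: w) by rewrite /x' opprD addrA subrr add0r.
  by rewrite normrN normrZ gtr0_norm.
have dxx' : `|x - x'| < rho'.
  have -> : x - x' = - (t *: u + s *: w).
    by apply/matrixP => a j; rewrite /x' /xt /u !mxE; ring.
  have hsum : t * `|u| + s * `|w| < rho' by lra.
  rewrite normrN; apply: le_lt_trans hsum; apply: (le_trans (ler_normD _ _)).
  by rewrite !normrZ !gtr0_norm.
have Ax' : (eball x r `&` X0) x'.
  split => //; rewrite /eball /=.
  apply: (le_lt_trans (@sqdist_le R d x x')).
  have q0 : 0 <= `|x - x'| by [].
  have q1 : `|x - x'| * (d%:R + 1) < r.
    apply: (lt_le_trans _ rho'2); rewrite ltr_pM2r //.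
  by apply: arith_sq.
have HT := Hrho x' Ax' (lt_le_trans dxx' rho'1).
set v := T x - T x'.
have Epos : 0 < dotv w (y - T x').
  have -> : y - T x' = w + v by rewrite /w /v addrA subrK.
  have -> : dotv w (w + v) = S2 + dotv w v.
    by rewrite /S2 /dotv -big_split /=; apply: eq_bigr => j _; rewrite [(w + v) _ _]mxE mulrDr.
  have h1 : - (S1 * `|v|) <= dotv w v.
    rewrite /S1 /dotv mulr_suml -sumrN; apply: ler_sum => j _.
    apply: lerNnormlW; rewrite normrM; apply: ler_wpM2l => //.
    exact: coord_le.
  have h2 : S1 * `|v| <= S1 * eps by apply: ler_wpM2l => //; apply: ltW.
  have h3 : S1 * eps < S2.
    rewrite /eps mulrA ltr_pdivrMr //; nra.
  lra.
set A := 2 * dotv (x' - x) (y - T x').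
set B := 2 * dotv (x0 - x') (T x' - y).
have hA : (A%:E <= Ifun (@sqdist R d) (spt ps) x y)%E.
  exact: (@cyc2 R d (spt ps) x y (x', T x') (GamT x' Xx')).
have hB : (B%:E <= Ifun (@sqdist R d) (spt ps) x y)%E.
  have := @cyc3 R d (spt ps) x y (x', T x') (x0, T x0) (GamT x' Xx') (GamT x0 Xx0).
  by rewrite /= -Ey.
have Ecomb : (1 - t) * A + t * B = 2 * s * dotv w (y - T x').
  rewrite /A /B /dotv !mulr_sumr -big_split /=; apply: eq_bigr => j _.
  rewrite /x' /xt /w !mxE; ring.
have : 0 < (1 - t) * A + t * B by rewrite Ecomb !mulr_gt0.
move=> Hc.
have [Apos|Ale] := ltP 0 A.
  by apply: (lt_le_trans _ hA); rewrite lte_fin.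
have Bpos : 0 < B by nra.
by apply: (lt_le_trans _ hB); rewrite lte_fin.
Qed.
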